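(* For $0\le i\le n$, $dp(i,i)$ is the largest pair in $DP_i$, and its second component equals $\pi_i$. For $1\le i\le n$, $dp(i,i)$ is the smallest pair (in lexicographic order) greater than $dp(i-1,i-1)$ among integer pairs whose second component equals $\pi_i$.
   Context: Let $x_0\le x_1\le\cdots\le x_{n+1}$ be real numbers, $\{x\}=x-\lfloor x\rfloor$, and let $\pi=(\pi_0,\dots,\pi_{n+1})$ be the permutation of $\{0,\dots,n+1\}$ such that for $0\le i<j\le n+1$, $\pi_i>\pi_j$ iff $(\{x_i\},-x_i,i)<(\{x_j\},-x_j,j)$ lexicographically. For a sequence of indices $s_0<\cdots<s_k$, a drop is a consecutive pair $(s_{h-1},s_h)$ with $\pi_{s_{h-1}}>\pi_{s_h}$. For $0\le h\le i\le n$, $dp(h,i)$ is the pair $(d(h,i),p(h,i))$, where $d(h,i)$ is the minimum number of drops over all sequences of $h+1$ indices $0=s_0<s_1<\cdots<s_h\le i$, and $p(h,i)$ is the minimum of $\pi_{s_h}$ over all such sequences having exactly $d(h,i)$ drops. Let $DP_i=\{dp(h,i)\mid 0\le h\le i\}$. Pairs are compared lexicographically. *)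

(* Defs.v *)
From HB Require Import structures.
From mathcomp Require Import all_boot all_order all_algebra.
From mathcomp Require Import reals.
Set Implicit Arguments. Unset Strict Implicit. Unset Printing Implicit Defensive.
Import Order.TTheory GRing.Theory Num.Theory.
Local Open Scope ring_scope.

Definition frac {R : realType} (x : R) : R := x - (Num.floor x)%:~R.

Definition lexlt3 {R : realType} (a b : R * R * nat) : bool :=
  (a.1.1 < b.1.1) ||
  ((a.1.1 == b.1.1) && ((a.1.2 < b.1.2) || ((a.1.2 == b.1.2) && (a.2 < b.2)%N))).

Definition key {R : realType} (x : nat -> R) (i : nat) : R * R * nat :=
  (frac (x i), - x i, i).

Definition admissible (i h : nat) (s : seq nat) : bool :=
  [&& size s == h.+1, nth 0%N s 0 == 0%N, sorted ltn s & all (fun k => k <= i)%N s].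

Definition drops (pi : nat -> nat) (s : seq nat) : nat :=
  count (fun pq : nat * nat => (pi pq.2 < pi pq.1)%N) (zip s (behead s)).

Definition is_d (pi : nat -> nat) (h i d : nat) : Prop :=
  (exists s, admissible i h s /\ drops pi s = d) /\
  (forall s, admissible i h s -> (d <= drops pi s)%N).

Definition is_p (pi : nat -> nat) (h i d p : nat) : Prop :=
  (exists s, [/\ admissible i h s, drops pi s = d & pi (nth 0%N s h) = p]) /\
  (forall s, admissible i h s -> drops pi s = d -> (p <= pi (nth 0%N s h))%N).

Definition is_dp (pi : nat -> nat) (h i : nat) (dp : nat * nat) : Prop :=
  is_d pi h i dp.1 /\ is_p pi h i dp.1 dp.2.

Definition lexle2 (a b : nat * nat) : bool :=
  (a.1 < b.1)%N || ((a.1 == b.1) && (a.2 <= b.2)%N).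
Definition lexltZ (a b : int * int) : bool :=
  (a.1 < b.1) || ((a.1 == b.1) && (a.2 < b.2)).
Definition lexleZ (a b : int * int) : bool :=
  (a.1 < b.1) || ((a.1 == b.1) && (a.2 <= b.2)).
Definition pairZ (a : nat * nat) : int * int := (a.1%:Z, a.2%:Z).

(* Main.v *)
Require Import Defs.
From HB Require Import structures.
From mathcomp Require Import all_boot all_order all_algebra.
From mathcomp Require Import reals zify.
Import Order.TTheory GRing.Theory Num.Theory.
Local Open Scope ring_scope.

Definition Dd (pi : nat -> nat) k := count (fun j => (pi j.+1 < pi j)%N) (iota 0 k).

Lemma zip_iota m k : zip (iota m k.+1) (iota m.+1 k) = [seq (j, j.+1) | j <- iota m k].
Proof. by elim: k m => [|k IH] m //=; rewrite IH. Qed.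

Lemma drops_iota pi k : drops pi (iota 0 k.+1) = Dd pi k.
Proof. by rewrite /drops /= zip_iota count_map. Qed.

Lemma Dd_S pi k : Dd pi k.+1 = (Dd pi k + (pi k.+1 < pi k)%N)%N.
Proof. by rewrite /Dd -(addn1 k) iotaD count_cat /= add0n addn0 addn1. Qed.

Lemma Dd_split pi h i : (h <= i)%N ->
  Dd pi i = (Dd pi h + count (fun j => (pi j.+1 < pi j)%N) (iota h (i - h)))%N.
Proof. by move=> hi; rewrite /Dd -{1}(subnKC hi) iotaD count_cat. Qed.

Lemma adm_iota h i : (h <= i)%N -> admissible i h (iota 0 h.+1).
Proof.
move=> hi; rewrite /admissible size_iota eqxx /=; apply/andP; split; first exact: (iota_ltn_sorted 0 h.+1).
by apply/allP => k; rewrite mem_iota ltnS => /andP[_ /leq_trans]; apply.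
Qed.

Lemma adm_diag i s : admissible i i s -> s = iota 0 i.+1.
Proof.
case/and4P => /eqP sz _ srt al.
have us : uniq s :=  (sorted_uniq ltn_trans ltnn srt).
have sub : {subset s <= iota 0 i.+1}.
  by move=> k ks; rewrite mem_iota ltnS (allP al k ks).
have [_ eqi] := uniq_min_size us sub (eq_leq (etrans (size_iota _ _) (esym sz))).
exact: (irr_sorted_eq ltn_trans ltnn srt (iota_ltn_sorted _ _) eqi).
Qed.

Lemma dp_diag pi i : is_dp pi i i (Dd pi i, pi i).
Proof.
split.
  split; first by exists (iota 0 i.+1); rewrite adm_iota // drops_iota.
  by move=> s /adm_diag ->; rewrite drops_iota.
split.
  exists (iota 0 i.+1); split; rewrite ?adm_iota ?drops_iota //.
  by rewrite nth_iota.
by move=> s /adm_diag ->; rewrite nth_iota.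
Qed.

Lemma dp_diag_uniq pi i dp : is_dp pi i i dp -> dp = (Dd pi i, pi i).
Proof.
case: dp => a b [[[s [As Ds]] _] [[t [At _ Pt]] _]] /=.
move: Ds Pt => /= Ds Pt; move: Ds Pt; rewrite (adm_diag _ _ As) (adm_diag _ _ At) drops_iota nth_iota // => <- <-.
by rewrite add0n.
Qed.

Lemma noDesc pi h i : (h <= i)%N -> Dd pi i = Dd pi h -> (pi h <= pi i)%N.
Proof.
move=> hi; rewrite (Dd_split pi h i hi) => E.
have c0 : count (fun j => (pi j.+1 < pi j)%N) (iota h (i - h)) = 0%N by lia.
rewrite -(subnKC hi); move: c0; elim: (i - h)%N => [|k IH]; first by rewrite addn0.
rewrite -(addn1 k) iotaD count_cat /= => C.
have /IH {}IH : count (fun j => (pi j.+1 < pi j)%N) (iota h k) = 0%N by lia.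
have : (pi (h + k).+1 < pi (h + k))%N = false by move: C; case: (_ < _)%N => //; lia.
rewrite addn1 addnS; move/negbT; rewrite -leqNgt => H; apply: leq_trans IH H.
Qed.

Theorem lemma8 (R : realType) (n : nat) (x : nat -> R) (pi : nat -> nat)
  (x_sorted : forall i, (i <= n)%N -> x i <= x i.+1)
  (pi_range : forall i, (i < n.+2)%N -> (pi i < n.+2)%N)
  (pi_inj : {in [pred i | (i < n.+2)%N] &, injective pi})
  (pi_def : forall i j, (i < j)%N -> (j <= n.+1)%N ->
     (pi j < pi i)%N = lexlt3 (key x i) (key x j)) :
  (forall i, (i <= n)%N ->
     exists dpi, [/\ is_dp pi i i dpi, dpi.2 = pi i &
       forall h dph, (h <= i)%N -> is_dp pi h i dph -> lexle2 dph dpi]) /\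
  (forall i, (1 <= i <= n)%N -> forall a b,
     is_dp pi i.-1 i.-1 a -> is_dp pi i i b ->
     [/\ (pairZ b).2 = (pi i)%:Z, lexltZ (pairZ a) (pairZ b) &
       forall c : int * int, c.2 = (pi i)%:Z -> lexltZ (pairZ a) c ->
         lexleZ (pairZ b) c]).
Proof.
split.
  move=> i iN; exists (Dd pi i, pi i); split => //; first exact: dp_diag.
  move=> h [a b] hi [[_ Hd] [_ Hp]] /=.
  have H1 := Hd _ (adm_iota h i hi); rewrite drops_iota /= in H1.
  have Dm : (Dd pi h <= Dd pi i)%N by rewrite (Dd_split pi h i hi) leq_addr.
  rewrite /lexle2 /=; case: ltnP => //= ge.
  have ea : a = Dd pi i by lia.
  have eh : Dd pi i = Dd pi h by lia.
  apply/andP; split; first by rewrite ea.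
  have H2 : (b <= pi (nth 0 (iota 0 h.+1) h))%N.
    by apply: (Hp _ (adm_iota h i hi)); rewrite drops_iota /= ea eh.
  rewrite nth_iota // add0n in H2; apply: leq_trans H2 (noDesc pi h i hi _); by [].
move=> [|j] // /andP[_ jn] a b Ha Hb.
rewrite (dp_diag_uniq _ _ _ Ha) (dp_diag_uniq _ _ _ Hb) /= Dd_S.
have ne : pi j != pi j.+1.
  apply/eqP => E; have := pi_inj j j.+1; rewrite !inE E => /(_ _ _ erefl); lia.
rewrite /pairZ /lexltZ /lexleZ /=.
case: ltnP => lt /=.
  split => //; first lia.
  move=> [c1 c2] /= -> ; lia.
split => //; first lia.
move=> [c1 c2] /= -> ; lia.
Qed.
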